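(* Let $\Gamma$ be a connected $\mathbb Z$-leg-weighted graph. Then all but finitely many weightings $w\in W(\Gamma)$ admit a positive cycle, i.e. a cycle $\gamma$ in $\Gamma$ such that $w(e)>0$ for every directed edge $e\in\gamma$ (where $w(e)$ is the value of $w$ on the half-edge of $e$ at its source).
   Context: A graph consists of finite sets $V$ (vertices) and $H$ (half-edges), a map $\mathrm{end}\colon H\to V$, an involution $i$ of $H$, a genus $g\colon V\to\mathbb Z_{\ge0}$ and an integer twist $k$. Legs are fixed points of $i$; a directed edge is a non-leg half-edge $h$, with source $\mathrm{end}(h)$ and target $\mathrm{end}(i(h))$. $\mathrm{val}(v)$ is the number of non-leg half-edges at $v$, $\kappa(v)=2g(v)-2+\mathrm{val}(v)$, $g(\Gamma)=b_1(\Gamma)+\sum_vg(v)$. A cycle is a closed walk of directed edges (target of each equals source of the next, returning to the start) repeating no vertex or undirected edge. A weighting is $w\colon H\to\mathbb Z$ with $w(h)+w(i(h))=0$ for $h\neq i(h)$ and $\sum_{\mathrm{end}(h)=v}w(h)+k\kappa(v)=0$ for all vertices $v$. A leg-weighted graph has given integer leg values summing to $-k(2g(\Gamma)-2)$, and $W(\Gamma)$ is the set of weightings with these leg values. *)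

(* Defs.v *)
From mathcomp Require Import all_boot all_order all_algebra.
Set Implicit Arguments. Unset Strict Implicit. Unset Printing Implicit Defensive.
Import Order.TTheory GRing.Theory Num.Theory.
Local Open Scope ring_scope.

(* A graph: vertices V, half-edges H (finite types), end map [en],
   involution [i] (hypothesis [involutive i] in the theorem),
   genus [g], twist [k : int] (passed separately). *)
Section Graph.
Variables (V H : finType) (en : H -> V) (i : H -> H) (g : V -> nat).

Definition is_leg (h : H) : bool := i h == h.

Definition valence (v : V) : nat := #|[pred h | (en h == v) && ~~ is_leg h]|.

Definition kappa (v : V) : int := 2%:Z * (g v)%:Z - 2%:Z + (valence v)%:Z.

Definition adj : rel V :=
  fun u v => [exists h : H, [&& ~~ is_leg h, en h == u & en (i h) == v]].

Definition connected_graph : Prop := forall u v : V, connect adj u v.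

Definition n_edges : nat := #|[pred h | ~~ is_leg h]| %/ 2.

Definition betti1 : int :=
  n_edges%:Z - #|V|%:Z + (n_comp adj predT)%:Z.

Definition graph_genus : int := betti1 + (\sum_(v : V) g v)%:Z.

Definition is_weighting (k : int) (w : {ffun H -> int}) : Prop :=
  (forall h, ~~ is_leg h -> w h + w (i h) = 0) /\
  (forall v, \sum_(h : H | en h == v) w h + k * kappa v = 0).

Definition leg_weighted (k : int) (ell : H -> int) : Prop :=
  \sum_(h : H | is_leg h) ell h = - (k * (2%:Z * graph_genus - 2%:Z)).

Definition in_W (k : int) (ell : H -> int) (w : {ffun H -> int}) : Prop :=
  is_weighting k w /\ (forall h, is_leg h -> w h = ell h).

(* A cycle: nonempty list of directed edges (non-leg half-edges)
   h_0,...,h_{n-1}, with target(h_j) = source(h_{j+1 mod n}),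
   no repeated vertex (sources pairwise distinct) and no repeated
   undirected edge ({h_j, i h_j} pairwise distinct). *)
Definition is_cycle (c : seq H) : Prop :=
  if c is h0 :: _ then
  [/\ (0 < size c)%N,
      all (fun h => ~~ is_leg h) c,
      forall j : nat, (j < size c)%N ->
        en (i (nth h0 c j)) = en (nth h0 c (j.+1 %% size c)),
      uniq (map en c) &
      forall j l : nat, (j < size c)%N -> (l < size c)%N -> j <> l ->
        nth h0 c l <> nth h0 c j /\
        nth h0 c l <> i (nth h0 c j)]
  else False.

Definition positive_cycle (w : {ffun H -> int}) (c : seq H) : Prop :=
  is_cycle c /\ (forall h, h \in c -> 0 < w h).

Definition has_positive_cycle (w : {ffun H -> int}) : Prop :=
  exists c : seq H, positive_cycle w c.

End Graph.

(* Main.v *)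
Require Import Defs.
From mathcomp Require Import all_boot all_order all_algebra.
From mathcomp Require Import zify.
Set Implicit Arguments. Unset Strict Implicit. Unset Printing Implicit Defensive.
Import Order.TTheory GRing.Theory Num.Theory.
Local Open Scope ring_scope.

Definition pos_he (H : finType) (i : H -> H) (w : {ffun H -> int}) (h : H) : bool :=
  (i h != h) && (0 < w h).

Fixpoint chain (V H : finType) (en : H -> V) (i : H -> H) (w : {ffun H -> int})
  (x : V) (c : seq H) (y : V) : bool :=
  match c with
  | [::] => x == y
  | h :: c' => [&& pos_he i w h, en h == x & chain en i w (en (i h)) c' y]
  end.

Definition padj (V H : finType) (en : H -> V) (i : H -> H) (w : {ffun H -> int}) : rel V :=
  fun u v => [exists h : H, [&& pos_he i w h, en h == u & en (i h) == v]].

Lemma chain_cat (V H : finType) (en : H -> V) (i : H -> H) (w : {ffun H -> int}) c1 c2 x y :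
  chain en i w x (c1 ++ c2) y -> exists z, chain en i w x c1 z /\ chain en i w z c2 y.
Proof.
elim: c1 x => [|h c1 IH] x /=; first by move=> H1; exists x; split.
case/and3P=> ph /eqP ex /IH [z [H1 H2]]; exists z; split => //.
by rewrite ph ex eqxx H1.
Qed.

Lemma chain_head (V H : finType) (en : H -> V) (i : H -> H) (w : {ffun H -> int}) h c x y :
  chain en i w x (h :: c) y -> en h = x.
Proof. by case/and3P=> _ /eqP. Qed.

Lemma chain_pos (V H : finType) (en : H -> V) (i : H -> H) (w : {ffun H -> int}) c x y :
  chain en i w x c y -> forall h, h \in c -> pos_he i w h.
Proof.
elim: c x => [|h' c IH] x //=.
case/and3P=> ph _ Hc h; rewrite inE => /orP [/eqP -> //|]; exact: IH Hc h.
Qed.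

Lemma chain_nth (V H : finType) (en : H -> V) (i : H -> H) (w : {ffun H -> int}) h0 c x y :
  chain en i w x c y -> forall j, (j < size c)%N ->
  en (i (nth h0 c j)) = nth y (map en c) j.+1.
Proof.
elim: c x => [|h c IH] x //=.
case/and3P=> ph _ Hc [|j] /= Hj.
  case: c IH Hc {Hj} => [|h' c] _ /=; first by move/eqP.
  by move/chain_head.
exact: IH Hc j Hj.
Qed.

Lemma chain_closed_cycle (V H : finType) (en : H -> V) (i : H -> H) (w : {ffun H -> int}) :
  involutive i ->
  (forall h, ~~ is_leg i h -> w h + w (i h) = 0) ->
  forall n c x, (size c <= n)%N -> c != [::] -> chain en i w x c x ->
  has_positive_cycle en i w.
Proof.
move=> iK wi; elim=> [|n IH] c x.
  by rewrite leqn0 => /nilP ->.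
case: c => [//|h0 c'] sc _ ch.
set c := h0 :: c' in sc ch *.
have [u|] := boolP (uniq (map en c)).
  exists c; split; last first.
    by move=> h hin; have /andP[_ ->] := chain_pos ch hin.
  split => //.
  - apply/allP => h hin; have /andP[] := chain_pos ch hin.
    by rewrite /is_leg.
  - move=> j Hj; rewrite (chain_nth h0 ch Hj).
    have [Hj1|Hj1] := ltnP j.+1 (size c).
      by rewrite modn_small // (nth_map h0).
    have -> : j.+1 = size c by apply/eqP; rewrite eqn_leq Hj1 Hj.
    rewrite modnn nth_default ?size_map //=.
    by rewrite (chain_head ch).
  - move=> j l Hj Hl jl; split.
      move=> E.
      have := nth_uniq (en h0) (_ : (l < size (map en c))%N)
                 (_ : (j < size (map en c))%N) u.
      rewrite !size_map !(nth_map h0) // E eqxx => /(_ Hl Hj) /esym/eqP.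
      by move=> lj; apply: jl.
    move=> E.
    have pl := chain_pos ch (mem_nth h0 Hl).
    have pj := chain_pos ch (mem_nth h0 Hj).
    move: pl; rewrite /pos_he E => /andP[_ p1].
    move: pj => /andP[nl p2].
    have HH := wi _ nl.
    by have := addr_gt0 p2 p1; rewrite HH ltxx.
case/(uniqPn x)=> a [b [ab bs E]].
rewrite size_map in bs.
have as' : (a < size c)%N by apply: ltn_trans ab bs.
rewrite !(nth_map h0) // in E.
move: ch; rewrite -(cat_take_drop a c) => /chain_cat [z1 [_ ch1]].
have dz1 : z1 = en (nth h0 c a).
  by move: ch1; rewrite (drop_nth h0 as'); move/chain_head.
move: ch1; rewrite -(cat_take_drop (b - a) (drop a c)) => /chain_cat [z2 [ch2 ch3]].
have dz2 : z2 = en (nth h0 c b).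
  move: ch3; rewrite drop_drop subnK ?(ltnW ab) //.
  by rewrite (drop_nth h0 bs); move/chain_head.
apply: (IH (take (b - a) (drop a c)) z1).
- rewrite size_takel ?size_drop; move: sc bs ab; rewrite /=; lia.
- rewrite -size_eq0 size_takel ?size_drop; move: bs ab; rewrite /=; lia.
- by rewrite {2}dz1 E -dz2.
Qed.

Lemma connect_chain (V H : finType) (en : H -> V) (i : H -> H) (w : {ffun H -> int}) x y :
  connect (padj en i w) x y -> exists c, chain en i w x c y.
Proof.
case/connectP => p pp ->.
elim: p x pp => [|z p IH] x /=; first by move=> _; exists [::]; rewrite /= eqxx.
case/andP => /existsP [h /and3P [ph /eqP ex /eqP ez]] /IH [c ch].
by exists (h :: c); rewrite /= ph ex eqxx ez.
Qed.

Lemma internal_zero (V H : finType) (en : H -> V) (i : H -> H) (w : {ffun H -> int})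
  (S : {set V}) : involutive i -> (forall h, ~~ is_leg i h -> w h + w (i h) = 0) ->
  \sum_(h | [&& en h \in S, ~~ is_leg i h & en (i h) \in S]) w h = 0.
Proof.
move=> iK wi.
set P := (fun h => [&& en h \in S, ~~ is_leg i h & en (i h) \in S]).
have E : \sum_(h | P h) w h = \sum_(h | P h) - w h.
  rewrite [LHS](reindex_inj (inv_inj iK)) /=; apply: eq_big => h.
    rewrite /P /is_leg iK [h == i h]eq_sym.
    by case: (en h \in S); case: (en (i h) \in S); rewrite ?andbF.
  move=> /and3P [_ nl _]; have := wi (i h) nl; rewrite iK; lia.
suff : \sum_(h | P h) w h = 0 by []. move: E; rewrite sumrN => E. have : \sum_(h | P h) w h + \sum_(h | P h) w h = 0 by rewrite {1}E addNr. lia.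
Qed.

Definition Kc (V H : finType) (en : H -> V) (i : H -> H) (g : V -> nat)
  (k : int) (ell : H -> int) (S : {set V}) : int :=
  \sum_(v in S) - (k * kappa en i g v) - \sum_(h | is_leg i h && (en h \in S)) ell h.

Lemma boundary_sum (V H : finType) (en : H -> V) (i : H -> H) (g : V -> nat)
  (k : int) (ell : H -> int) (w : {ffun H -> int}) :
  involutive i -> in_W en i g k ell w -> forall S : {set V},
  \sum_(h | [&& en h \in S, ~~ is_leg i h & en (i h) \notin S]) w h = Kc en i g k ell S.
Proof.
move=> iK [[wi wv] wl] S.
have tot : \sum_(h | en h \in S) w h = \sum_(v in S) - (k * kappa en i g v).
  rewrite (partition_big en (mem S)) //=; apply: eq_bigr => v vS.
  rewrite (eq_bigl (fun h => en h == v)); last first.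
    by move=> h; rewrite andb_idl // => /eqP ->.
  move: (wv v) => E; apply/eqP; rewrite -addr_eq0; apply/eqP; exact: E.
have split1 : \sum_(h | en h \in S) w h = \sum_(h | (en h \in S) && is_leg i h) w h
   + \sum_(h | (en h \in S) && ~~ is_leg i h) w h := bigID _ _ _.
have split2 : \sum_(h | (en h \in S) && ~~ is_leg i h) w h =
   \sum_(h | (en h \in S) && ~~ is_leg i h && (en (i h) \in S)) w h
   + \sum_(h | (en h \in S) && ~~ is_leg i h && ~~ (en (i h) \in S)) w h := bigID _ _ _.
have L1 : \sum_(h | (en h \in S) && is_leg i h) w h =
          \sum_(h | is_leg i h && (en h \in S)) ell h.
  by apply: eq_big => [h|h /andP[_ hl]]; [rewrite andbC | exact: wl].
have L2 : \sum_(h | (en h \in S) && ~~ is_leg i h && (en (i h) \in S)) w h = 0.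
  by rewrite -[RHS](internal_zero en S iK wi); apply: eq_bigl => h; rewrite andbA.
have L3 : \sum_(h | (en h \in S) && ~~ is_leg i h && ~~ (en (i h) \in S)) w h =
          \sum_(h | [&& en h \in S, ~~ is_leg i h & en (i h) \notin S]) w h.
  by apply: eq_bigl => h; rewrite andbA.
by rewrite /Kc -tot split1 split2 L1 L2 L3 add0r addrC addKr.
Qed.

Lemma pos_bound (V H : finType) (en : H -> V) (i : H -> H) (g : V -> nat)
  (k : int) (ell : H -> int) (w : {ffun H -> int}) :
  involutive i -> in_W en i g k ell w -> ~ has_positive_cycle en i w ->
  forall h, pos_he i w h ->
  - ((\sum_(S : {set V}) absz (Kc en i g k ell S))%N%:Z) <= w (i h).
Proof.
move=> iK wW npc h ph.
have wi := wW.1.1.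
set S := [set v | connect (padj en i w) (en (i h)) v].
have hS : en h \notin S.
  apply/negP; rewrite inE => /connect_chain [c ch].
  apply: npc; apply: (chain_closed_cycle iK wi (n := size (h :: c)) (c := h :: c) (x := en h)) => //=.
  by rewrite /= ph eqxx ch.
have ihS : en (i h) \in S by rewrite inE connect0.
have bnd := boundary_sum iK wW S.
have nl : ~~ is_leg i (i h).
  by rewrite /is_leg iK; move: ph => /andP[]; rewrite eq_sym.
rewrite (bigD1 (i h)) /= in bnd; last by rewrite ihS nl iK hS.
have rest : \sum_(j | [&& en j \in S, ~~ is_leg i j & en (i j) \notin S] && (j != i h)) w j <= 0.
  apply: sumr_le0 => j /andP [/and3P [jS jl jnS] _].
  rewrite leNgt; apply/negP => wj.
  move/negP: jnS; apply; rewrite inE.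
  have pj : padj en i w (en j) (en (i j)).
    apply/existsP; exists j; rewrite !eqxx !andbT /pos_he wj andbT; exact: jl.
  apply: connect_trans (connect1 pj); by move: jS; rewrite inE.
have KM : (absz (Kc en i g k ell S) <= \sum_(S : {set V}) absz (Kc en i g k ell S))%N.
  by rewrite (bigD1 S) //= leq_addr.
have h1 : Kc en i g k ell S <= w (i h) by rewrite -bnd gerDl.
move: h1 KM; lia.
Qed.

Lemma aux_box (x : int) (M : nat) : -(M%:Z) <= x -> x <= M%:Z ->
  (absz (x + M%:Z)%R < (2 * M).+1)%N /\ x = (absz (x + M%:Z))%:Z - M%:Z.
Proof. lia. Qed.

Theorem lemma3p9 (V H : finType) (en : H -> V) (i : H -> H) (g : V -> nat)
    (k : int) (ell : H -> int) :
  involutive i ->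
  connected_graph en i ->
  leg_weighted en i g k ell ->
  exists s : seq {ffun H -> int},
    forall w : {ffun H -> int},
      in_W en i g k ell w -> ~ has_positive_cycle en i w -> w \in s.
Proof.
move=> iK _ _.
set M := (\sum_(S : {set V}) absz (Kc en i g k ell S))%N.
exists [seq [ffun h => if is_leg i h then ell h else (nat_of_ord (f h))%:Z - M%:Z]
       | f : {ffun H -> 'I_(2 * M).+1} <- enum {ffun H -> 'I_(2 * M).+1}].
move=> w wW npc.
have wi := wW.1.1.
have bd : forall h, ~~ is_leg i h -> (- (M%:Z) <= w h) /\ (w h <= M%:Z).
  move=> h nl; have := wi h nl.
  case: (ltrgtP (w h) 0) => hw.
  - have pih : pos_he i w (i h).
      rewrite /pos_he iK; apply/andP; split; first by rewrite eq_sym.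
      move: hw (wi h nl); lia.
    have := pos_bound iK wW npc pih; rewrite iK; lia.
  - have ph : pos_he i w h by rewrite /pos_he; apply/andP.
    have := pos_bound iK wW npc ph; lia.
  - lia.
set f := [ffun h => inord (absz (w h + M%:Z)%R) : 'I_(2 * M).+1].
apply/mapP; exists f; first by rewrite mem_enum.
apply/ffunP => h; rewrite !ffunE.
case: ifP => hl; first by rewrite (wW.2 h hl).
have [b1 b2] := bd h (negbT hl).
have [a1 a2] := aux_box b1 b2.
by rewrite inordK.
Qed.
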